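(* Let $R$ be a ring satisfying the irreducible intersection property. Then for every ideal $I\subset R$, the quotient $R/I$ satisfies the irreducible intersection property, and for every multiplicative subset $S\subset R$, the localization $S^{-1}R$ satisfies the irreducible intersection property. Moreover, if $R_1,\dots,R_n$ are rings each satisfying the irreducible intersection property, then $R_1\times\cdots\times R_n$ satisfies the irreducible intersection property.
   Context: All rings are commutative with $1$. A ring $R$ satisfies the irreducible intersection property if for any prime ideals $p_1,p_2\subset R$, either $p_1+p_2=R$ or $p_1+p_2$ is a prime ideal. *)

(* Defs.v *)
(* Commutative rings with 1 are [comPzRingType] (the zero ring
   is allowed, so that R/R and S^{-1}R with 0 in S are covered). *)
From HB Require Import structures.
From mathcomp Require Import all_boot all_order all_algebra.
Set Implicit Arguments. Unset Strict Implicit. Unset Printing Implicit Defensive.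
Import GRing.Theory.
Local Open Scope ring_scope.

Definition is_ideal (R : comPzRingType) (I : R -> Prop) : Prop :=
  [/\ I 0, (forall x y, I x -> I y -> I (x + y)) & (forall r x, I x -> I (r * x))].

Definition is_prime_ideal (R : comPzRingType) (P : R -> Prop) : Prop :=
  [/\ is_ideal P, ~ P 1 & (forall x y, P (x * y) -> P x \/ P y)].

Definition ideal_sum (R : comPzRingType) (I J : R -> Prop) : R -> Prop :=
  fun z => exists x y, [/\ I x, J y & z = x + y].

Definition IIP (R : comPzRingType) : Prop :=
  forall p1 p2 : R -> Prop, is_prime_ideal p1 -> is_prime_ideal p2 ->
    (forall z, ideal_sum p1 p2 z) \/ is_prime_ideal (ideal_sum p1 p2).

Definition is_multiplicative (R : comPzRingType) (S : R -> Prop) : Prop :=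
  S 1 /\ (forall x y, S x -> S y -> S (x * y)).

(* Q together with f is (a model of) the quotient ring R/I:
   f is a surjective ring morphism with kernel exactly I. *)
Definition is_quotient_by (R Q : comPzRingType) (I : R -> Prop)
    (f : {rmorphism R -> Q}) : Prop :=
  (forall q : Q, exists r, f r = q) /\ (forall r, f r = 0 <-> I r).

(* L together with g is (a model of) the localization S^{-1}R:
   images of S are units, every element is g r / g s with s in S,
   and the kernel of g is {r | s r = 0 for some s in S}. *)
Definition is_localization_at (R L : comPzRingType) (S : R -> Prop)
    (g : {rmorphism R -> L}) : Prop :=
  [/\ (forall s, S s -> exists u, g s * u = 1),
      (forall y : L, exists r s, S s /\ y * g s = g r) &
      (forall r, g r = 0 <-> exists s, S s /\ s * r = 0)].

(* P together with the projections pi is (a model of) R_1 x ... x R_n: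
   the map p |-> (pi i p)_i is a bijection onto all families. *)
Definition is_product (n : nat) (Rs : 'I_n -> comPzRingType) (P : comPzRingType)
    (pi : forall i, {rmorphism P -> Rs i}) : Prop :=
  forall x : (forall i, Rs i),
    exists p, (forall i, pi i p = x i) /\
      (forall p', (forall i, pi i p' = x i) -> p' = p).

(* Main.v *)
From HB Require Import structures.
Require Import Defs.
From mathcomp Require Import all_boot all_order all_algebra.
From mathcomp Require Import ring.
From Stdlib Require Import Classical FunctionalExtensionality PropExtensionality.
Set Implicit Arguments. Unset Strict Implicit. Unset Printing Implicit Defensive.
Import GRing.Theory.
Local Open Scope ring_scope.

Definition pre (R L : comPzRingType) (g : R -> L) (q : L -> Prop) : R -> Prop :=
  fun r => q (g r).

Lemma pre_prime (R L : comPzRingType) (g : {rmorphism R -> L}) q :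
  is_prime_ideal q -> is_prime_ideal (pre g q).
Proof.
case=> [[q0 qD qM] q1 qP]; split; rewrite /pre.
- split; first by rewrite rmorph0.
  + by move=> x y hx hy; rewrite rmorphD; apply: qD.
  + by move=> r x hx; rewrite rmorphM; apply: qM.
- by rewrite rmorph1.
- by move=> x y; rewrite rmorphM; apply: qP.
Qed.

Lemma sum_ideal (R : comPzRingType) (p1 p2 : R -> Prop) :
  is_ideal p1 -> is_ideal p2 -> is_ideal (ideal_sum p1 p2).
Proof.
case=> [a0 aD aM] [b0 bD bM]; split.
- by exists 0, 0; rewrite addr0.
- move=> _ _ [x [y [hx hy ->]]] [x' [y' [hx' hy' ->]]].
  exists (x + x'), (y + y'); split; [exact: aD|exact: bD|].
  by rewrite addrACA.
- move=> r _ [x [y [hx hy ->]]]; exists (r * x), (r * y).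
  split; [exact: aM|exact: bM|].
  by rewrite mulrDr.
Qed.

Lemma sum_map (R L : comPzRingType) (g : {rmorphism R -> L}) q1 q2 r :
  ideal_sum (pre g q1) (pre g q2) r -> ideal_sum q1 q2 (g r).
Proof. by case=> x [y [hx hy ->]]; exists (g x), (g y); rewrite rmorphD. Qed.

Lemma sum_whole (R : comPzRingType) (p1 p2 : R -> Prop) :
  is_ideal p1 -> is_ideal p2 -> ideal_sum p1 p2 1 -> forall z, ideal_sum p1 p2 z.
Proof.
move=> h1 h2 h z; case: (sum_ideal h1 h2) => _ _ hM.
by rewrite -(mulr1 z); apply: hM.
Qed.

Lemma gen_IIP (R L : comPzRingType) (g : {rmorphism R -> L}) (S : R -> Prop) :
  (forall s, S s -> exists u, g s * u = 1) ->
  (forall y, exists r s, S s /\ y * g s = g r) ->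
  (forall q1 q2 r, is_prime_ideal q1 -> is_prime_ideal q2 ->
     ideal_sum q1 q2 (g r) ->
     exists s, S s /\ ideal_sum (pre g q1) (pre g q2) (s * r)) ->
  IIP R -> IIP L.
Proof.
move=> hU hF hK hR q1 q2 Q1 Q2.
have I1 : is_ideal q1 by case: Q1.
have I2 : is_ideal q2 by case: Q2.
have IS := sum_ideal I1 I2.
have [h1|n1] := classic (ideal_sum q1 q2 1).
  by left; apply: sum_whole.
have unitC : forall s, S s -> ideal_sum q1 q2 (g s) -> False.
  move=> s Ss hs; apply: n1; have [u hu] := hU s Ss.
  rewrite -hu mulrC; by case: IS => _ _; apply.
right; split => //.
move=> z1 z2 hz.
have [r1 [s1 [S1 e1]]] := hF z1.
have [r2 [s2 [S2 e2]]] := hF z2.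
have hg : ideal_sum q1 q2 (g (r1 * r2)).
  rewrite rmorphM -e1 -e2.
  have -> : z1 * g s1 * (z2 * g s2) = g (s1 * s2) * (z1 * z2).
    by rewrite rmorphM; ring.
  by case: IS => _ _; apply.
have [s [Ss hs]] := hK _ _ _ Q1 Q2 hg.
have [Hw|[_ _ Hp]] := hR _ _ (pre_prime g Q1) (pre_prime g Q2).
  by case: n1; rewrite -(rmorph1 g); apply: sum_map; apply: Hw.
have fin : forall z r s', S s' -> z * g s' = g r ->
    ideal_sum (pre g q1) (pre g q2) r -> ideal_sum q1 q2 z.
  move=> z r s' Ss' e hr; have [u hu] := hU s' Ss'.
  have -> : z = u * g r by rewrite -e mulrCA (mulrC u) hu mulr1.
  by case: IS => _ _; apply; apply: sum_map.
case: (Hp _ _ hs) => [/(sum_map (g:=g)) /(unitC _ Ss) //|/Hp [h|h]].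
  by left; apply: (fin _ _ _ S1 e1).
by right; apply: (fin _ _ _ S2 e2).
Qed.

Lemma quot_IIP (R Q : comPzRingType) (I : R -> Prop) (f : {rmorphism R -> Q}) :
  is_quotient_by I f -> IIP R -> IIP Q.
Proof.
case=> hs _; apply: (gen_IIP (S := fun s => s = 1)).
- by move=> s ->; exists 1; rewrite rmorph1 mulr1.
- by move=> y; have [r <-] := hs y; exists r, 1; rewrite rmorph1 mulr1.
- move=> q1 q2 r _ _ [a [b [ha hb e]]].
  have [x ex] := hs a.
  exists 1; split => //; rewrite mul1r; exists x, (r - x); split.
  + by rewrite /pre ex.
  + by rewrite /pre rmorphB e -ex addrC addKr.
  + by rewrite addrC subrK.
Qed.

Lemma loc_IIP (R L : comPzRingType) (S : R -> Prop) (g : {rmorphism R -> L}) :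
  is_multiplicative S -> is_localization_at S g -> IIP R -> IIP L.
Proof.
move=> [_ SM] [hU hF hker]; apply: (gen_IIP hU hF).
move=> q1 q2 r [[a0 aD aM] _ _] [[b0 bD bM] _ _] [a [b [ha hb e]]].
have [x [s [Ss es]]] := hF a.
have [y [t [St et]]] := hF b.
have hx : pre g q1 x by rewrite /pre -es mulrC; apply: aM.
have hy : pre g q2 y by rewrite /pre -et mulrC; apply: bM.
have : g (r * s * t - (x * t + y * s)) = 0.
  rewrite rmorphB rmorphD !rmorphM -es -et e; ring.
case/hker => s' [Ss' e0].
exists (s' * s * t); split; first exact: (SM _ _ (SM _ _ Ss' Ss) St).
exists (s' * t * x), (s' * s * y); split.
- by rewrite /pre rmorphM; apply: aM.
- by rewrite /pre rmorphM; apply: bM.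
- move/eqP: e0; rewrite mulrBr subr_eq0 => /eqP e0.
  have -> : s' * s * t * r = s' * (r * s * t) by ring.
  by rewrite e0; ring.
Qed.

Lemma prod_inj n (Rs : 'I_n -> comPzRingType) (P : comPzRingType) (pi : forall i, {rmorphism P -> Rs i}) :
  is_product pi -> forall a b : P, (forall i, pi i a = pi i b) -> a = b.
Proof.
move=> hP a b h; have [p [_ hu]] := hP (fun i => pi i a).
by rewrite (hu a (fun=> erefl)) (hu b (fun i => esym (h i))).
Qed.

Lemma prod_surj n (Rs : 'I_n -> comPzRingType) (P : comPzRingType) (pi : forall i, {rmorphism P -> Rs i}) :
  is_product pi -> forall i (a : Rs i), exists p, pi i p = a.
Proof.
move=> hP i a.
pose x := fun k : 'I_n => match i =P k with
  | ReflectT e => eq_rect i (fun k => (Rs k : Type)) a k e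
  | ReflectF _ => 0 end.
have [p [hp _]] := hP x; exists p; rewrite hp /x.
case: (i =P i) => [e|//]; by rewrite (eq_irrelevance e erefl).
Qed.

Lemma prod_elt n (Rs : 'I_n -> comPzRingType) (P : comPzRingType) (pi : forall i, {rmorphism P -> Rs i}) :
  is_product pi -> forall i, exists e, forall k, pi k e = (k == i)%:R.
Proof. by move=> hP i; have [p [hp _]] := hP (fun k => (k == i)%:R); exists p. Qed.

Lemma prod_index n (Rs : 'I_n -> comPzRingType) (P : comPzRingType) (pi : forall i, {rmorphism P -> Rs i})
  (q : P -> Prop) :
  is_product pi -> is_prime_ideal q ->
  exists i e, (forall k, pi k e = (k == i)%:R) /\ ~ q e.
Proof.
move=> hP [[q0 qD qM] q1 qp].
apply: NNPP => H.
have all : forall A : seq 'I_n, exists e, q e /\ forall k, pi k e = (k \in A)%:R.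
  elim=> [|a A [eA [qA hA]]].
    by exists 0; split => // k; rewrite rmorph0.
  have [ea ha] := prod_elt hP a.
  have qa : q ea by apply: NNPP => nq; apply: H; exists a, ea.
  exists (ea + eA + (- ea) * eA); split.
    exact: (qD _ _ (qD _ _ qa qA) (qM _ _ qA)).
  move=> k; rewrite !rmorphD rmorphM rmorphN ha hA in_cons.
  by case: (k == a); case: (k \in A) => /=; ring.
have [e [qe he]] := all (enum 'I_n).
apply: q1; suff <- : e = 1 by [].
by apply: (prod_inj hP) => k; rewrite he mem_enum rmorph1.
Qed.

Lemma prod_iff n (Rs : 'I_n -> comPzRingType) (P : comPzRingType) (pi : forall i, {rmorphism P -> Rs i})
  (q : P -> Prop) i e :
  is_product pi -> is_prime_ideal q ->
  (forall k, pi k e = (k == i)%:R) -> ~ q e ->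
  forall x, q x <-> (fun a => exists y, q y /\ pi i y = a) (pi i x).
Proof.
move=> hP [[q0 qD qM] q1 qp] he ne x; split; first by move=> qx; exists x.
case=> y [qy hxy].
have exy : e * x = e * y.
  apply: (prod_inj hP) => k; rewrite !rmorphM he.
  case E: (k == i); last by rewrite !mul0r.
  move/eqP: E => E; subst k; by rewrite hxy.
have : q (e * x) by rewrite exy; apply: qM.
by case/qp.
Qed.

Lemma image_prime (P T : comPzRingType) (f : {rmorphism P -> T}) (q : P -> Prop) p :
  (forall a, exists x, f x = a) -> is_prime_ideal q ->
  (forall x, q x <-> p (f x)) -> is_prime_ideal p.
Proof.
move=> hs [[q0 qD qM] q1 qp] hi; split; first split.
- by rewrite -(rmorph0 f) -hi.
- move=> a b; have [x <-] := hs a; have [y <-] := hs b.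
  by rewrite -!hi -rmorphD -hi; apply: qD.
- move=> r a; have [x <-] := hs a; have [z <-] := hs r.
  by rewrite -rmorphM -!hi; apply: qM.
- by rewrite -(rmorph1 f) -hi.
- move=> a b; have [x <-] := hs a; have [y <-] := hs b.
  by rewrite -rmorphM -!hi; apply: qp.
Qed.

Lemma sum_iff (P T : comPzRingType) (f : {rmorphism P -> T}) (q1 q2 : P -> Prop) p1 p2 :
  (forall a, exists x, f x = a) ->
  (forall x, q1 x <-> p1 (f x)) -> (forall x, q2 x <-> p2 (f x)) ->
  forall z, ideal_sum q1 q2 z <-> ideal_sum p1 p2 (f z).
Proof.
move=> hs h1 h2 z; split.
  by case=> x [y [hx hy ->]]; exists (f x), (f y); split; [exact/h1|exact/h2|rewrite rmorphD].
case=> a [b [ha hb e]]; have [x ex] := hs a.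
exists x, (z - x); split.
- by apply/h1; rewrite ex.
- by apply/h2; rewrite rmorphB e -ex addrC addKr.
- by rewrite addrC subrK.
Qed.

Lemma prod_IIP n (Rs : 'I_n -> comPzRingType) (P : comPzRingType)
  (pi : forall i, {rmorphism P -> Rs i}) :
  (forall i, IIP (Rs i)) -> is_product pi -> IIP P.
Proof.
move=> hR hP q1 q2 Q1 Q2.
have [i [e1 [he1 ne1]]] := prod_index hP Q1.
have [j [e2 [he2 ne2]]] := prod_index hP Q2.
have I1 : is_ideal q1 by case: Q1.
have I2 : is_ideal q2 by case: Q2.
have [E|nij] := eqVneq i j; last first.
  left; apply: sum_whole => //.
  case: Q1 => [[_ _ qM1] _ qp1]; case: Q2 => [[_ _ qM2] _ qp2].
  have a2 : q2 e1.
    have : q2 (e1 * e2).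
      suff -> : e1 * e2 = 0 by case: I2.
      apply: (prod_inj hP) => k; rewrite rmorphM rmorph0 he1 he2.
      case E: (k == i); last by rewrite mul0r.
      have -> : (k == j) = false by rewrite (eqP E) (negbTE nij).
      by rewrite mulr0.
    by case/qp2.
  have a1 : q1 (1 - e1).
    have : q1 ((1 - e1) * e1).
      suff -> : (1 - e1) * e1 = 0 by case: I1.
      apply: (prod_inj hP) => k; rewrite rmorphM rmorph0 rmorphB rmorph1 he1.
      by case: (k == i) => /=; ring.
    by case/qp1.
  by exists (1 - e1), e1; split => //; rewrite subrK.
subst j.
have hs := prod_surj hP (i := i).
have H1 := prod_iff hP Q1 he1 ne1.
have H2 := prod_iff hP Q2 he2 ne2.
pose p1 := fun a => exists y, q1 y /\ pi i y = a.
pose p2 := fun a => exists y, q2 y /\ pi i y = a.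
have P1 := image_prime (p := p1) hs Q1 H1.
have P2 := image_prime (p := p2) hs Q2 H2.
have Hs := sum_iff (p1 := p1) (p2 := p2) hs H1 H2.
case: (hR i _ _ P1 P2) => [W|Pr].
  by left => z; rewrite Hs.
right.
have -> : ideal_sum q1 q2 = pre (pi i) (ideal_sum p1 p2).
  by apply: functional_extensionality => z; apply: propositional_extensionality; apply: Hs.
exact: pre_prime.
Qed.

Theorem mainTheorem9 :
  (forall (R : comPzRingType), IIP R ->
     (forall (I : R -> Prop) (Q : comPzRingType) (f : {rmorphism R -> Q}),
        is_ideal I -> is_quotient_by I f -> IIP Q) /\
     (forall (S : R -> Prop) (L : comPzRingType) (g : {rmorphism R -> L}),
        is_multiplicative S -> is_localization_at S g -> IIP L)) /\
  (forall (n : nat) (Rs : 'I_n -> comPzRingType) (P : comPzRingType)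
          (pi : forall i, {rmorphism P -> Rs i}),
     (forall i, IIP (Rs i)) -> is_product pi -> IIP P).
Proof.
split.
  move=> R hR; split.
    by move=> I Q f _ hq; apply: quot_IIP hq hR.
  by move=> S L g hm hl; apply: loc_IIP hm hl hR.
by move=> n Rs P pi hR hP; apply: prod_IIP hR hP.
Qed.
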